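(* The language classes GRLOWJ and GLLOWJ are incomparable (neither is a subset of the other).
   Context: A generalized right linear one-way jumping finite automaton (GRLOWJFA) is a tuple A = (Σ, Q, q_0, F, R) with alphabet Σ, finite state set Q, start state q_0, final states F ⊆ Q, and a finite set of rules R ⊂ Q × Σ^+ × Q such that for each p ∈ Q and w ∈ Σ^+ there is at most one q with (p,w,q) ∈ R (rule (p,w,q): from p, delete w, go to q). For p ∈ Q let Σ_p = {w ∈ Σ^+ : (p,w,q) ∈ R for some q}. Configurations are strings in Σ^* Q Σ^*, with moves: (1) for t,u,v ∈ Σ^* and (p,x,q) ∈ R, tpuxv ⇒ tuqv, provided u contains no word of Σ_p as a subword and there is no nonempty suffix u_2 of u and nonempty prefix x_1 of x with u_2x_1 = x; (2) for x ∈ Σ^+ and y ∈ Σ^* such that y contains no word of Σ_p as a subword, xpy ⇒ pxy. Accepted language: {w ∈ Σ^* : q_0 w ⇒^* q_f for some q_f ∈ F}. A generalized left linear one-way jumping finite automaton (GLLOWJFA) is a tuple A = (Σ, Q, q_0, F, R) with R ⊂ Q × Σ^+ × Q finite; a rule (q,w,p) means from p, delete w, go to q, and for each p and w there is at most one such q. For p ∈ Q let Σ_p = {w ∈ Σ^+ : (q,w,p) ∈ R for some q}. Configurations are strings in Σ^* Q Σ^*, with moves: (1) for t,u,v ∈ Σ^* and (q,x,p) ∈ R, vxupt moves to vqut, provided u contains no word of Σ_p as a subword and there is no nonempty prefix u_1 of u and nonempty suffix x_2 of x with x_2u_1 = x; (2) for x ∈ Σ^+ and y ∈ Σ^* such that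 y contains no word of Σ_p as a subword, ypx moves to yxp. Accepted language: {w ∈ Σ^* : w q_0 leads in zero or more moves to q_f for some q_f ∈ F}. GRLOWJ and GLLOWJ denote the classes of languages accepted by GRLOWJFA and GLLOWJFA respectively. *)

(* Defs.v *)
From mathcomp Require Import all_boot.
Set Implicit Arguments. Unset Strict Implicit. Unset Printing Implicit Defensive.

(* Rules of an automaton: a finite set R of triples (p, w, q) with w nonempty.
   A configuration in Sigma^* Q Sigma^* is represented as (left, state, right). *)

Section GOWJFA.
Variables (S : finType) (Q : finType).
Notation rules := (seq (Q * seq S * Q)).

Definition cfg := (seq S * Q * seq S)%type.

Definition rules_nonempty (R : rules) : Prop :=
  forall p w q, (p, w, q) \in R -> w != [::].

Definition R_det (R : rules) : Prop :=
  forall p w q1 q2, (p, w, q1) \in R -> (p, w, q2) \in R -> q1 = q2.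

Definition R_avoids (R : rules) (p : Q) (y : seq S) : Prop :=
  forall w q, (p, w, q) \in R -> ~~ infix w y.

Inductive R_step (R : rules) : cfg -> cfg -> Prop :=
| R_step_del : forall (t u v x : seq S) (p q : Q),
    (p, x, q) \in R ->
    R_avoids R p u ->
    ~ (exists u2 x1 : seq S, [/\ u2 != [::], x1 != [::], suffix u2 u,
                                 prefix x1 x & u2 ++ x1 = x]) ->
    R_step R (t, p, u ++ x ++ v) (t ++ u, q, v)
| R_step_jump : forall (x y : seq S) (p : Q),
    x != [::] ->
    R_avoids R p y ->
    R_step R (x, p, y) ([::], p, x ++ y).

(* a rule (q,w,p): from p, delete w, go to q; for each p and w at most one q *)
Definition L_det (R : rules) : Prop :=
  forall p w q1 q2, (q1, w, p) \in R -> (q2, w, p) \in R -> q1 = q2.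

Definition L_avoids (R : rules) (p : Q) (y : seq S) : Prop :=
  forall w q, (q, w, p) \in R -> ~~ infix w y.

Inductive L_step (R : rules) : cfg -> cfg -> Prop :=
| L_step_del : forall (t u v x : seq S) (p q : Q),
    (q, x, p) \in R ->
    L_avoids R p u ->
    ~ (exists u1 x2 : seq S, [/\ u1 != [::], x2 != [::], prefix u1 u,
                                 suffix x2 x & x2 ++ u1 = x]) ->
    L_step R (v ++ x ++ u, p, t) (v, q, u ++ t)
| L_step_jump : forall (x y : seq S) (p : Q),
    x != [::] ->
    L_avoids R p y ->
    L_step R (y, p, x) (y ++ x, p, [::]).

Inductive star (st : cfg -> cfg -> Prop) : cfg -> cfg -> Prop :=
| star_refl : forall c, star st c c
| star_step : forall c1 c2 c3, st c1 c2 -> star st c2 c3 -> star st c1 c3.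

Definition R_accepts (R : rules) (q0 : Q) (F : pred Q) (w : seq S) : Prop :=
  exists2 qf, qf \in F & star (R_step R) ([::], q0, w) ([::], qf, [::]).

Definition L_accepts (R : rules) (q0 : Q) (F : pred Q) (w : seq S) : Prop :=
  exists2 qf, qf \in F & star (L_step R) (w, q0, [::]) ([::], qf, [::]).

End GOWJFA.

Definition language (S : finType) := seq S -> Prop.

Definition GRLOWJ (S : finType) (L : language S) : Prop :=
  exists (Q : finType) (q0 : Q) (F : pred Q) (R : seq (Q * seq S * Q)),
    [/\ rules_nonempty R, R_det R & forall w, L w <-> R_accepts R q0 F w].

Definition GLLOWJ (S : finType) (L : language S) : Prop :=
  exists (Q : finType) (q0 : Q) (F : pred Q) (R : seq (Q * seq S * Q)),
    [/\ rules_nonempty R, L_det R & forall w, L w <-> L_accepts R q0 F w].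

(* Main.v *)
Require Import Defs.
From mathcomp Require Import all_boot zify.
Set Implicit Arguments. Unset Strict Implicit. Unset Printing Implicit Defensive.

Lemma star_trans (S Q : finType) (st : cfg S Q -> cfg S Q -> Prop) c1 c2 c3 :
  star st c1 c2 -> star st c2 c3 -> star st c1 c3.
Proof. move=> H; elim: H => // x y z s _ IH H2; exact: (star_step s (IH H2)). Qed.

Lemma star1 (S Q : finType) (st : cfg S Q -> cfg S Q -> Prop) c1 c2 :
  st c1 c2 -> star st c1 c2.
Proof. move=> H; exact: (star_step H (star_refl _ _)). Qed.

Section Gen.
Variables (S Q : finType) (R : seq (Q * seq S * Q)).
Hypothesis Rne : rules_nonempty R.

Lemma avoids_nil p : R_avoids R p [::].
Proof. by move=> w q /Rne hw; rewrite infixs0. Qed.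

Lemma noov_nil (x : seq S) : ~ (exists u2 x1 : seq S,
  [/\ u2 != [::], x1 != [::], suffix u2 [::], prefix x1 x & u2 ++ x1 = x]).
Proof. by move=> [u2 [x1 [hu _ hs _ _]]]; move: hs; rewrite suffixs0 (negbTE hu). Qed.

Lemma step_head L p x q T : (p, x, q) \in R -> R_step R (L, p, x ++ T) (L, q, T).
Proof.
move=> h; have := R_step_del L T h (avoids_nil (p:=p)) (@noov_nil x).
by rewrite cats0.
Qed.

Definition hchain p X q := forall L T, star (R_step R) (L, p, X ++ T) (L, q, T).

Lemma hchain_nil p : hchain p [::] p.
Proof. by move=> L T; apply: star_refl. Qed.

Lemma hchain_cons p x q X r : (p, x, q) \in R -> hchain q X r -> hchain p (x ++ X) r.
Proof. by move=> h hc L T; rewrite -catA; exact: (star_step (step_head L _ h) (hc L T)). Qed.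

Lemma cat3_nil (u x v : seq S) : u ++ x ++ v = [::] -> x = [::].
Proof. by case: u => //; case: x. Qed.

Lemma step_rnil' c1 c2 : R_step R c1 c2 -> c1.2 = [::] -> c2 = ([::], c1.1.2, c1.1.1).
Proof.
case=> [t u v x p q h _ _|x y p _ _] /= E.
  by have := Rne h; rewrite (cat3_nil E).
by rewrite E cats0.
Qed.

Lemma step_rnil t q c' : R_step R (t, q, [::]) c' -> c' = ([::], q, t).
Proof. by move=> H; exact: (step_rnil' H). Qed.

Lemma star_nil_end q c c' : star (R_step R) c c' -> c = ([::], q, [::]) -> c' = ([::], q, [::]).
Proof.
elim=> [c0 -> //| c1 c2 c3 s _ IH E]; subst; apply: IH.
exact: (step_rnil' s erefl).
Qed.

Lemma star_rnil_jump t q c' : star (R_step R) (t, q, [::]) c' ->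
  c' = (t, q, [::]) \/ star (R_step R) ([::], q, t) c'.
Proof.
move=> H; move Ec: (t, q, [::]) H => c H.
case: H Ec => [c0 _ | c1 c2 c3 s st E]; first by left.
by right; subst c1; rewrite (step_rnil s) in st.
Qed.

End Gen.

Notation la := (Some true : option bool).
Notation lb := (Some false : option bool).
Notation lc := (None : option bool).

Definition Ec (w : seq (option bool)) : Prop :=
  exists g, [/\ w = rcons g lc, lc \notin g & count_mem la g = count_mem lb g].
Definition cE (w : seq (option bool)) : Prop :=
  exists g, [/\ w = lc :: g, lc \notin g & count_mem la g = count_mem lb g].

Lemma Ec_last w : Ec w -> last lc w = lc.
Proof. by case=> g [-> _ _]; rewrite last_rcons. Qed.

Lemma Ec_bal w : Ec w -> count_mem la w = count_mem lb w.
Proof. by case=> g [-> _ h]; rewrite -!cats1 !count_cat h. Qed.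

Definition rank (y : option bool) := match y with Some true => 0 | Some false => 1 | None => 2 end.
Definition rle := fun y z : option bool => rank y <= rank z.
Lemma rle_trans : transitive rle.
Proof. by move=> y x z; apply: leq_trans. Qed.

Lemma sorted_noab s1 s2 : sorted rle (s1 ++ s2) -> lb \in s1 -> la \notin s2.
Proof.
rewrite (sorted_pairwise rle_trans) pairwise_cat => /and3P[/allrelP h _ _] hb.
by apply/negP => ha; have := h _ _ hb ha.
Qed.

Lemma sorted_sub t u x v : sorted rle (t ++ u ++ x ++ v) -> sorted rle ((t ++ u) ++ v).
Proof.
apply: (subseq_sorted rle_trans); rewrite catA cat_subseq //; exact: suffix_subseq.
Qed.

Lemma all_a x : lc \notin x -> lb \notin x -> count_mem la x = size x /\ count_mem lb x = 0.
Proof.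
move=> hc hb; split; last by apply/eqP; rewrite -leqn0 leqNgt -has_count has_pred1.
apply/eqP; rewrite -all_count; apply/allP => y yx /=.
by case: y yx => [[]|] // yx; [rewrite yx in hb | rewrite yx in hc].
Qed.

Lemma last_nc (x : seq (option bool)) d : x != [::] -> lc \notin x -> last d x != lc.
Proof.
case/lastP: x => // x y _; rewrite last_rcons mem_rcons inE negb_or.
by case/andP; rewrite eq_sym.
Qed.

Lemma suffix_last_c (u2 r' : seq (option bool)) : u2 != [::] -> suffix u2 (rcons r' lc) -> lc \in u2.
Proof.
move=> hu /suffixP [s E]; case/lastP: u2 hu E => // u2 y _ E.
by move: E; rewrite -rcons_cat => /rcons_inj [_ ->]; rewrite mem_rcons inE eqxx.
Qed.

Lemma G_sorted i j : sorted rle (nseq i la ++ nseq j lb ++ [:: lc]).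
Proof.
rewrite (sorted_pairwise rle_trans) !pairwise_cat /=.
have pn : forall k (y : option bool), pairwise rle (nseq k y).
  by move=> k y; elim: k => //= k ->; rewrite all_nseq /rle leqnn orbT.
rewrite !pn andbT /=; apply/andP; split; last apply/andP; last split => //.
  apply/allrelP => y z; rewrite mem_nseq => /andP[_ /eqP ->].
  by rewrite mem_cat mem_nseq inE => /orP[/andP[_ /eqP ->]|/eqP ->].
by apply/allrelP => y z; rewrite mem_nseq => /andP[_ /eqP ->]; rewrite inE => /eqP ->.
Qed.

Lemma clast_split (u x v r' : seq (option bool)) : x != [::] -> lc \notin x ->
  u ++ x ++ v = rcons r' lc -> exists2 v', v = rcons v' lc & r' = u ++ x ++ v'.
Proof.
move=> hx hcx; case/lastP: v => [|v' z].
  rewrite cats0 => Er; have : last lc (u ++ x) = lc by rewrite Er last_rcons.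
  by rewrite last_cat => /eqP; rewrite (negbTE (last_nc _ hx hcx)).
by rewrite -!rcons_cat => /rcons_inj [<- ->]; exists v'.
Qed.

Lemma clast_c (u x v r' : seq (option bool)) : lc \in x -> lc \notin r' ->
  u ++ x ++ v = rcons r' lc -> v = [::] /\ lc \notin u.
Proof.
move=> hcx hcr; case/lastP: v => [|v' z].
  rewrite cats0; case/lastP: x hcx => // x' z hcx.
  rewrite -rcons_cat => /rcons_inj [Er _]; split => //.
  by apply: contra hcr; rewrite -Er mem_cat => ->.
rewrite -!rcons_cat => /rcons_inj [Er _]; exfalso; move/negP: hcr; apply.
by rewrite -Er !mem_cat hcx orbT.
Qed.

Section NotR.
Variables (Q : finType) (q0 : Q) (F : pred Q) (R : seq (Q * seq (option bool) * Q)).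
Hypothesis Rne : rules_nonempty R.
Hypothesis HL : forall w, Ec w <-> R_accepts R q0 F w.

Definition K := \max_(e <- R) size e.1.2.
Lemma sizeK p x q : (p, x, q) \in R -> size x <= K.
Proof. move=> h; exact: (@leq_bigmax_seq _ R xpredT (fun e => size e.1.2) (p, x, q) h isT). Qed.

Definition N := #|Q|.
Definition KN := K * N.
Definition n := (N.+1 * KN).+1.
Definition G := nseq n la ++ nseq n lb ++ [:: lc].

Lemma sizeS (S : seq Q) : uniq S -> size S <= N.
Proof. by move=> u; rewrite -(card_uniqP u); exact: max_card. Qed.

Lemma arithA (a a' b b' ax bx m : nat) : a + ax = m -> b + bx = m -> a' < a -> b' = b ->
  a' + ax = b' + bx -> False.
Proof. lia. Qed.

Definition acc w := R_accepts R q0 F w.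
Definition HD D p := forall T, star (R_step R) ([::], q0, D ++ T) ([::], p, T).
Definition Lift W0 t p r := forall X, star (R_step R) ([::], q0, W0 ++ X) (t, p, r ++ X).
Definition WitJ (j : Q) (t : seq (option bool)) p := exists Z, lc \in Z /\
  ((last lc Z != lc /\ forall X, hchain R p X j -> acc (Z ++ X)) \/
   [/\ t = [::], p = j & forall x1 q1 Y, (j, x1, q1) \in R -> lc \notin x1 ->
        hchain R q1 Y j -> acc (Z ++ x1 ++ Y)]).
Definition ca (s : seq (option bool)) := count_mem la s.
Definition cb (s : seq (option bool)) := count_mem lb s.
Definition Mode D p (r : seq (option bool)) A :=
  (exists D', [/\ HD D' p, ca D' < ca D & cb D' = cb D])
  \/ (exists S, [/\ uniq S, S != [::],
        (forall s, s \in S -> exists Ds, [/\ HD Ds s, ca Ds <= ca D & cb Ds = cb D])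
        & A <= K * (size S).-1])
  \/ (la \notin r /\ A <= KN).
Definition Inv (cf : cfg (option bool) Q) : Prop :=
  let: (t, p, r) := cf in
  exists D W0 J A,
  [/\ [/\ ca (D ++ t ++ r) = n, cb (D ++ t ++ r) = n, sorted rle (t ++ r)
        & exists r', r = rcons r' lc /\ lc \notin t ++ r'],
      [/\ HD D p, Lift W0 t p r & lc \in W0],
      [/\ uniq J, forall j, j \in J -> WitJ j t p & ca D <= size J * KN + A]
    & Mode D p r A].

Lemma Inv0 : Inv ([::], q0, G).
Proof.
exists [::], G, [::], 0; split.
- split.
  + by rewrite /ca /G !count_cat !count_nseq /= !mul1n !mul0n !add0n !addn0.
  + by rewrite /cb /G !count_cat !count_nseq /= !mul1n !mul0n !add0n !addn0.
  + exact: G_sorted.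
  + exists (nseq n la ++ nseq n lb); split; first by rewrite /G -cats1 catA.
    by rewrite cat0s mem_cat !mem_nseq !andbF.
- split => //; first by move=> T; exact: star_refl.
  + by move=> X; exact: star_refl.
  + by rewrite /G !mem_cat mem_seq1 eqxx !orbT.
- by [].
right; left; exists [:: q0]; split => //.
by move=> s; rewrite inE => /eqP ->; exists [::]; split => //; move=> T; exact: star_refl.
Qed.


Lemma HD_ext D p x q : (p, x, q) \in R -> HD D p -> HD (D ++ x) q.
Proof.
move=> hr hD T; rewrite -catA; apply: star_trans (hD (x ++ T)) _.
exact: star1 (step_head Rne [::] T hr).
Qed.

Lemma acc_HD D p q x : (p, x, q) \in R -> q \in F -> HD D p -> acc (D ++ x).
Proof.
move=> hr hq hD; exists q => //; apply: star_trans (hD x) _; apply: star1.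
by have := step_head Rne [::] [::] hr; rewrite cats0.
Qed.

Lemma del_nc t u x v p q : (p, x, q) \in R -> R_avoids R p u ->
  ~ (exists u2 x1, [/\ u2 != [::], x1 != [::], suffix u2 u, prefix x1 x & u2 ++ x1 = x]) ->
  lc \notin x -> Inv (t, p, u ++ x ++ v) -> Inv (t ++ u, q, v).
Proof.
move=> hr ha hn hcx [D [W0 [J [A [[ca1 cb1 srt [r' [Er hc']]] [hD hL hW] [uJ hJ hA] hM]]]]].
have hx : x != [::] := Rne hr.
have sK := sizeK hr.
have [v' Ev Er'] := clast_split hx hcx Er.
have hcv : lc \notin (t ++ u) ++ v'.
  move: hc'; rewrite Er' !mem_cat.
  by case: (lc \in t); case: (lc \in u); case: (lc \in x); case: (lc \in v').
exists (D ++ x), W0, J, (A + ca x); split.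
- split.
  + by move: ca1; rewrite /ca !count_cat; lia.
  + by move: cb1; rewrite /cb !count_cat; lia.
  + exact: sorted_sub srt.
  + by exists v'.
- split => //; first exact: HD_ext hr hD.
  move=> X; apply: star_trans (hL X) _; apply: star1; rewrite -!catA.
  exact (R_step_del t (v ++ X) hr ha hn).
- split => //.
  + move=> j /hJ [Z [hcZ hZ]]; exists (Z ++ x); split; first by rewrite mem_cat hcZ.
    left; split; first by rewrite last_cat last_nc.
    case: hZ => [[_ hZ]|[_ pj hZ]] X hX; rewrite -catA.
      by apply: hZ; exact (hchain_cons Rne hr hX).
    by apply: hZ => //; rewrite -pj.
  + by move: hA; rewrite /ca count_cat; lia.
case: hM => [[D' [hD' lt eq]]|[[S [uS nS hS hAS]]|[na hAB]]].
- left; exists (D' ++ x); split; first exact: HD_ext hr hD'.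
    by move: lt; rewrite /ca !count_cat; lia.
  by move: eq; rewrite /cb !count_cat; lia.
- have hS0 : 0 < size S by rewrite lt0n size_eq0.
  have hSN := sizeS uS.
  have hAK : A + ca x <= K * size S.
    rewrite -(prednK hS0) mulnSr; apply: leq_add => //.
    exact: leq_trans (count_size _ _) sK.
  case: (boolP (lb \in x)) => hbx.
    right; right; split.
      apply: (@sorted_noab (t ++ u ++ x)); first by rewrite -!catA.
      by rewrite !mem_cat hbx !orbT.
    by apply: leq_trans hAK _; rewrite /KN leq_mul2l hSN orbT.
  have [hax hbx'] := all_a hcx hbx.
  case: (boolP (q \in S)) => hqS.
    left; have [Dq [hDq haq hbq]] := hS q hqS; exists Dq; split => //.
      have hx0 : 0 < size x by rewrite lt0n size_eq0.
      move: haq; rewrite /ca count_cat hax => haq.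
      by apply: leq_ltn_trans haq _; rewrite -{1}[count_mem la D]addn0 ltn_add2l.
    by rewrite hbq /cb count_cat hbx' addn0.
  right; left; exists (q :: S); split => //=; first by rewrite hqS uS.
  move=> s; rewrite inE => /orP[/eqP ->|hs].
    exists (D ++ x); split => //; exact: HD_ext hr hD.
  have [Ds [hDs has hbs]] := hS s hs; exists Ds; split => //.
    by apply: leq_trans has _; rewrite /ca count_cat leq_addr.
  by rewrite hbs /cb count_cat hbx' addn0.
- right; right; split.
    by move: na; rewrite !mem_cat !negb_or => /and3P[].
  have : ca x = 0.
    by apply/count_memPn; move: na; rewrite !mem_cat !negb_or => /and3P[].
  by move=> ->; rewrite addn0.
Qed.


Lemma bound_final D (J : seq Q) A x : ca D <= size J * KN + A -> uniq J ->
  ((exists S : seq Q, [/\ uniq S, S != [::], A <= K * (size S).-1 & size x <= K]) \/ (A <= KN /\ ca x = 0)) ->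
  ca (D ++ x) < n.
Proof.
move=> hA uJ hM; have hJN := sizeS uJ.
have hle : ca (D ++ x) <= size J * KN + KN.
  rewrite /ca count_cat; case: hM => [[S' [uS nS hAS sx]]|[hAB hx0]].
    have hS0 : 0 < size S' by rewrite lt0n size_eq0.
    have hAK : A + count_mem la x <= KN.
      apply: (@leq_trans (K * size S')); last by rewrite /KN leq_mul2l sizeS ?orbT.
      rewrite -(prednK hS0) mulnSr; apply: leq_add => //.
      exact: leq_trans (count_size _ _) sx.
    by move: hA hAK; rewrite /ca; lia.
  by move: hx0 hA hAB; rewrite /ca => ->; lia.
apply: leq_ltn_trans hle _; rewrite /n ltnS mulSn addnC leq_add2l leq_mul2r hJN orbT //.
Qed.

Lemma del_c t u x v p q qf : (p, x, q) \in R -> lc \in x -> qf \in F ->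
  star (R_step R) (t ++ u, q, v) ([::], qf, [::]) -> Inv (t, p, u ++ x ++ v) -> False.
Proof.
move=> hr hcx hqf hst [D [W0 [J [A [[ca1 cb1 srt [r' [Er hc']]] [hD hL hW] [uJ hJ hA] hM]]]]].
have hx : x != [::] := Rne hr.
have hcr : lc \notin r' by move: hc'; rewrite mem_cat negb_or => /andP[].
have [Ev hcu0] := clast_c hcx hcr Er.
subst v.
have hcu : lc \notin t ++ u.
  by rewrite mem_cat negb_or hcu0 andbT; move: hc'; rewrite mem_cat negb_or => /andP[].
case: (eqVneq (t ++ u) [::]) => htu.
  move: hst; rewrite htu => /(star_nil_end Rne) /(_ erefl) [Eq]; subst q.
  have [Et Eu] : t = [::] /\ u = [::] by move: (congr1 size htu); rewrite size_cat => /eqP; rewrite addn_eq0 !size_eq0 => /andP[/eqP -> /eqP ->].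
  subst t u; rewrite /= cats0 in ca1 cb1.
  case: hM => [[D' [hD' lt eq]]|hM].
    have := Ec_bal (proj2 (HL _) (acc_HD hr hqf hD')).
    by move: ca1 cb1 lt eq; rewrite /ca /cb !count_cat; exact: arithA.
  suff : ca (D ++ x) < n by rewrite ca1 ltnn.
  apply: (bound_final hA uJ).
  case: hM => [[S [uS nS _ hAS]]|[na hAB]].
    by left; exists S; split => //; exact: sizeK hr.
  right; split => //; apply/count_memPn.
  by move: na; rewrite /= !mem_cat !negb_or => /andP[].
have [E1|hst2] := star_rnil_jump Rne hst.
  by have E2 := congr1 (fun c => c.1.1) E1; rewrite /= in E2; rewrite -E2 eqxx in htu.
have hacc : acc (D ++ x ++ (t ++ u)).
  exists qf => //; apply: star_trans (hD (x ++ (t ++ u))) _.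
  exact: star_step (step_head Rne [::] (t ++ u) hr) hst2.
have := Ec_last (proj2 (HL _) hacc); rewrite catA last_cat => /eqP.
by rewrite (negbTE (last_nc _ htu hcu)).
Qed.

Lemma jump_case t p y qf : t != [::] -> R_avoids R p y -> qf \in F ->
  star (R_step R) ([::], p, t ++ y) ([::], qf, [::]) -> Inv (t, p, y) -> Inv ([::], p, t ++ y).
Proof.
move=> ht hy hqf hst [D [W0 [J [A [[ca1 cb1 srt [r' [Er hc']]] [hD hL hW] [uJ hJ hA] hM]]]]].
have hAle : A <= KN.
  case: hM => [[D' [hD' lt eq]]|[[S [uS nS hS hAS]]|[_ h]]] //.
    have hacc : acc (D' ++ t ++ y) by exists qf => //; apply: star_trans (hD' (t ++ y)) hst.
    have := Ec_bal (proj2 (HL _) hacc).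
    by move: ca1 cb1 lt eq; rewrite /ca /cb !count_cat; lia.
  apply: leq_trans hAS _; rewrite /KN leq_mul2l; apply/orP; right.
  exact: leq_trans (leq_pred _) (sizeS uS).
have hpJ : p \notin J.
  apply/negP => /hJ [Z [hcZ [[hl hZ]|[t0 _ _]]]]; last by rewrite t0 in ht.
  have := Ec_last (proj2 (HL _) (hZ [::] (hchain_nil R p))); rewrite cats0 => /eqP.
  by rewrite (negbTE hl).
exists D, (D ++ (t ++ y)), (p :: J), 0; split.
- split => //.
  exists (t ++ r'); split; first by rewrite Er rcons_cat.
  by [].
- split => //.
    by move=> X; rewrite -catA; exact: hD.
  by rewrite !mem_cat Er mem_rcons inE eqxx !orbT.
- split.
  + by rewrite /= hpJ uJ.
  + move=> j; rewrite inE => /orP[/eqP ->|hj].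
      exists W0; split => //; right; split => // x1 q1 Y hr1 hcx1 hY.
      exists qf => //; apply: star_trans (hL (x1 ++ Y)) _.
      have hn : ~ (exists u2 x1', [/\ u2 != [::], x1' != [::], suffix u2 y, prefix x1' x1 & u2 ++ x1' = x1]).
        move=> [u2 [x1' [hu2 _ hs _ he]]].
        have hs' : suffix u2 (rcons r' lc) by rewrite -Er.
        by have hc2 := suffix_last_c hu2 hs'; move/negP: hcx1; apply; rewrite -he mem_cat hc2.
      apply: star_step (R_step_del t Y hr1 hy hn) _.
      have hY' := hY (t ++ y) [::]; rewrite cats0 in hY'.
      apply: star_trans hY' _.
      apply: star_step (R_step_jump _ (@avoids_nil _ _ R Rne p)) _.
        by apply: contra ht; rewrite -!size_eq0 size_cat addn_eq0 => /andP[].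
      by rewrite cats0.
    have [Z [hcZ [[hl hZ]|[t0 _ _]]]] := hJ j hj; last by rewrite t0 in ht.
    by exists Z; split => //; left.
  + by move: hA hAle; rewrite /= mulSn addn0; lia.
right; left; exists [:: p]; split => //.
by move=> s; rewrite inE => /eqP ->; exists D; split.
Qed.

Lemma main_star c1 c2 : star (R_step R) c1 c2 ->
  forall qf, c2 = ([::], qf, [::]) -> qf \in F -> Inv c1 -> False.
Proof.
elim=> [c qf -> _|d1 d2 d3 s st IH qf E hqf] hI.
  by case: hI => D [W0 [J [A [[_ _ _ [r' [Er _]]] _ _ _]]]]; case: r' Er.
subst d3; case: s hI st IH => [t u v x p q hr ha hn|x y p hx hy] hI st IH.
  case: (boolP (lc \in x)) => hcx; first exact: (del_c hr hcx hqf st hI).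
  by apply: (IH qf erefl hqf); exact: (del_nc hr ha hn hcx hI).
by apply: (IH qf erefl hqf); exact: (jump_case hx hy hqf st hI).
Qed.

Lemma notR : False.
Proof.
have hG : Ec G.
  exists (nseq n la ++ nseq n lb); split; first by rewrite /G -cats1 catA.
    by rewrite mem_cat !mem_nseq !andbF.
  by rewrite !count_cat !count_nseq /= mul1n mul0n addn0.
have [qf hqf hst] := proj1 (HL G) hG.
exact: (main_star hst erefl hqf Inv0).
Qed.

End NotR.

Lemma Ec_notR : ~ GRLOWJ Ec.
Proof. by case=> Q [q0 [F [R [Rne _ HL]]]]; exact: (notR Rne HL). Qed.


Notation QA := (option (option bool)).
Notation sS := (None : QA).
Notation sD := (Some None : QA).
Notation s0 := (Some (Some true) : QA).
Notation s1 := (Some (Some false) : QA).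

Definition RA : seq (QA * seq (option bool) * QA) :=
  [:: (sS, [:: lc], s0); (sS, [:: la], sD); (sS, [:: lb], sD); (s0, [:: la], s1); (s1, [:: lb], s0)].
Definition FA : pred QA := pred1 s0.

Lemma RA_ne : rules_nonempty RA.
Proof.
have H : all (fun e : QA * seq (option bool) * QA => e.1.2 != [::]) RA := erefl true.
by move=> p w q /(allP H).
Qed.

Lemma RA_det : R_det RA.
Proof.
have H : all (fun e1 => all (fun e2 : QA * seq (option bool) * QA =>
   (e1.1 == e2.1) ==> (e1 == e2)) RA) RA := erefl true.
move=> p w q1 q2 h1 h2; have := allP (allP H _ h1) _ h2.
by rewrite /= eqxx /= => /eqP [].
Qed.

Lemma split_first (T : eqType) (y : T) r : y \in r -> exists u v, r = u ++ y :: v /\ y \notin u.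
Proof.
elim: r => // z r IH; rewrite inE; case: (eqVneq y z) => [<- _|hne /= hy].
  by exists [::], r.
have [u [v [-> hu]]] := IH hy; exists (z :: u), v; split => //.
by rewrite inE negb_or hne.
Qed.

Lemma del_first p y q t r : (p, [:: y], q) \in RA ->
  (forall w' q', (p, w', q') \in RA -> w' = [:: y]) -> y \in r ->
  exists u v, [/\ r = u ++ y :: v, y \notin u & R_step RA (t, p, r) (t ++ u, q, v)].
Proof.
move=> hr hw hy; have [u [v [Er hu]]] := split_first hy.
exists u, v; split => //; rewrite Er -cat1s.
apply: R_step_del hr _ _.
  by move=> w' q' /hw ->; rewrite infix1s.
move=> [u2 [x1 [hu2 hx1 _ _ he]]]; move/(congr1 size): he; rewrite size_cat /=.
by case: u2 hu2 => // a l _; case: x1 hx1 => // b l2 _ /=; lia.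
Qed.

Lemma letters (s : seq (option bool)) : lc \notin s -> count_mem la s = 0 -> count_mem lb s = 0 -> s = [::].
Proof.
case: s => // y s; rewrite inE negb_or /= => /andP[hy _].
by case: y hy => [[]|] //= _; rewrite add1n.
Qed.

Definition InvS (w : seq (option bool)) (cf : cfg (option bool) QA) : Prop :=
  let: (t, q, r) := cf in
  match q with
  | None => t = [::] /\ r = w
  | Some None => True
  | Some (Some true) => exists g, [/\ w = lc :: g, count_mem lc (t ++ r) = count_mem lc g &
        count_mem la (t ++ r) + count_mem lb g = count_mem lb (t ++ r) + count_mem la g]
  | Some (Some false) => exists g, [/\ w = lc :: g, count_mem lc (t ++ r) = count_mem lc g &
        (count_mem la (t ++ r)).+1 + count_mem lb g = count_mem lb (t ++ r) + count_mem la g]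
  end.

Lemma sound_step w c1 c2 : R_step RA c1 c2 -> InvS w c1 -> InvS w c2.
Proof.
case=> [t u v x p q hr ha _|x y p hx _].
  move: hr ha; rewrite !inE => /orP[/eqP[-> -> ->]|/orP[/eqP[-> -> ->]|/orP[/eqP[-> -> ->]|
    /orP[/eqP[-> -> ->]|/eqP[-> -> ->]]]]] //= ha.
  - move=> [Et Ew]; subst t; case: u ha Ew => [_ <-|y u ha _].
      by exists v; split => //; rewrite addnC.
    exfalso; have : infix [:: y] (y :: u) by rewrite infix1s inE eqxx.
    case: y ha => [[]|] ha; [apply/negP; apply: (ha _ sD) | apply/negP; apply: (ha _ sD)
      | apply/negP; apply: (ha _ s0)]; by rewrite !inE.
  - case=> g [Ew Ec Ea]; exists g; split => //.
      by move: Ec; rewrite !count_cat /=; lia.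
    by move: Ea; rewrite !count_cat /=; lia.
  - case=> g [Ew Ec Ea]; exists g; split => //.
      by move: Ec; rewrite !count_cat /=; lia.
    by move: Ea; rewrite !count_cat /=; lia.
by case: p => [[[]|]|] //= [/eqP]; rewrite (negbTE hx).
Qed.

Lemma sound_star w c1 c2 : star (R_step RA) c1 c2 -> InvS w c1 -> InvS w c2.
Proof. by elim=> // d1 d2 d3 s _ IH /(sound_step s). Qed.

Lemma RA_sound w : R_accepts RA sS FA w -> cE w.
Proof.
case=> qf hqf hst; have := sound_star hst (conj erefl erefl : InvS w ([::], sS, w)).
move: hqf; rewrite /FA inE => /eqP -> /= [g [Ew Ec Ea]].
exists g; split => //; first by apply/count_memPn; rewrite Ec.
all: by move: Ea; lia.
Qed.

Lemma only0 w' q' : (s0, w', q') \in RA -> w' = [:: la].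
Proof.
have H : all (fun e : QA * seq (option bool) * QA => (e.1.1 == s0) ==> (e.1.2 == [:: la])) RA := erefl true.
by move=> h; have := allP H _ h; rewrite /= ?eqxx /= => /eqP.
Qed.

Lemma only1 w' q' : (s1, w', q') \in RA -> w' = [:: lb].
Proof.
have H : all (fun e : QA * seq (option bool) * QA => (e.1.1 == s1) ==> (e.1.2 == [:: lb])) RA := erefl true.
by move=> h; have := allP H _ h; rewrite /= ?eqxx /= => /eqP.
Qed.

Lemma avoid0 r : la \notin r -> R_avoids RA s0 r.
Proof. by move=> h w' q' /only0 ->; rewrite infix1s. Qed.

Lemma avoid1 r : lb \notin r -> R_avoids RA s1 r.
Proof. by move=> h w' q' /only1 ->; rewrite infix1s. Qed.

Lemma comp m : forall t r, size (t ++ r) <= m -> lc \notin t ++ r ->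
  (count_mem la (t ++ r) = count_mem lb (t ++ r) -> star (R_step RA) (t, s0, r) ([::], s0, [::])) /\
  ((count_mem la (t ++ r)).+1 = count_mem lb (t ++ r) -> star (R_step RA) (t, s1, r) ([::], s0, [::])).
Proof.
elim: m => [|m IH] t r.
  rewrite leqn0 size_eq0 => /eqP E _.
  have [-> ->] : t = [::] /\ r = [::] by case: t E => //; case: r.
  by split => // _; exact: star_refl.
move=> hs hc.
have del0 : forall t' r', size (t' ++ r') <= m.+1 -> lc \notin t' ++ r' -> la \in r' ->
    count_mem la (t' ++ r') = count_mem lb (t' ++ r') -> star (R_step RA) (t', s0, r') ([::], s0, [::]).
  move=> t' r' hs' hc' hin hab.
  have hr : (s0, [:: la], s1) \in RA by [].
  have [u [v [Er hu st]]] := del_first t' hr (@only0) hin.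
  apply: star_step st _; subst r'; apply: (proj2 (IH (t' ++ u) v _ _)).
  - by move: hs'; rewrite !size_cat /=; lia.
  - apply: contra hc'; rewrite !mem_cat inE.
    by case: (lc \in t'); case: (lc \in u); case: (lc \in v).
  - by move: hab; rewrite !count_cat /=; lia.
have del1 : forall t' r', size (t' ++ r') <= m.+1 -> lc \notin t' ++ r' -> lb \in r' ->
    (count_mem la (t' ++ r')).+1 = count_mem lb (t' ++ r') -> star (R_step RA) (t', s1, r') ([::], s0, [::]).
  move=> t' r' hs' hc' hin hab.
  have hr : (s1, [:: lb], s0) \in RA by [].
  have [u [v [Er hu st]]] := del_first t' hr (@only1) hin.
  apply: star_step st _; subst r'; apply: (proj1 (IH (t' ++ u) v _ _)).
  - by move: hs'; rewrite !size_cat /=; lia.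
  - apply: contra hc'; rewrite !mem_cat inE.
    by case: (lc \in t'); case: (lc \in u); case: (lc \in v).
  - by move: hab; rewrite !count_cat /=; lia.
split => hab.
  case: (boolP (la \in r)) => hin; first exact: del0.
  case: (eqVneq t [::]) => ht.
    subst t; rewrite cat0s in hc hab; have ha0 : count_mem la r = 0 by apply/count_memPn.
    by rewrite (letters hc ha0 (etrans (esym hab) ha0)); exact: star_refl.
  apply: star_step (R_step_jump ht (avoid0 hin)) _.
  apply: del0 => //; apply/negPn/negP => hn.
  have ha0 : count_mem la (t ++ r) = 0 by apply/count_memPn.
  have E := letters hc ha0 (etrans (esym hab) ha0).
  by move: ht; rewrite -size_eq0; move/(congr1 size): E; rewrite size_cat /=; lia.
have hb : lb \in t ++ r by rewrite -has_pred1 has_count -hab.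
case: (boolP (lb \in r)) => hin; first exact: del1.
have ht : t != [::] by apply: contraNneq hin => Et; rewrite Et in hb.
apply: star_step (R_step_jump ht (avoid1 hin)) _.
exact: del1.
Qed.

Lemma RA_complete w : cE w -> R_accepts RA sS FA w.
Proof.
case=> g [-> hg hab]; exists s0; first by rewrite /FA inE.
have hr : (sS, [:: lc], s0) \in RA by [].
apply: star_step (step_head RA_ne [::] g hr) _.
exact: (proj1 (comp (leqnn (size ([::] ++ g))) hg) hab).
Qed.

Lemma cE_R : GRLOWJ cE.
Proof.
exists QA, sS, FA, RA; split; [exact: RA_ne | exact: RA_det |].
by move=> w; split; [exact: RA_complete | exact: RA_sound].
Qed.

Lemma star_map (S Q : finType) (st1 st2 : cfg S Q -> cfg S Q -> Prop) (f : cfg S Q -> cfg S Q) c1 c2 :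
  (forall a b, st1 a b -> st2 (f a) (f b)) -> star st1 c1 c2 -> star st2 (f c1) (f c2).
Proof.
move=> hf; elim=> [c|a b c s _ IH]; first exact: star_refl.
exact: star_step (hf _ _ s) IH.
Qed.

Section Mirror.
Variables (S Q : finType).

Definition mirR (R : seq (Q * seq S * Q)) : seq (Q * seq S * Q) :=
  map (fun e => (e.2, rev e.1.2, e.1.1)) R.
Definition mc (c : cfg S Q) : cfg S Q := (rev c.2, c.1.2, rev c.1.1).

Lemma mem_mirR R p w q : ((p, w, q) \in mirR R) = ((q, rev w, p) \in R).
Proof.
apply/mapP/idP => [[[[q' w'] p'] h [-> -> ->]]|h]; first by rewrite revK.
by exists (q, rev w, p) => //=; rewrite revK.
Qed.

Lemma mirRK R : mirR (mirR R) = R.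
Proof. by rewrite /mirR -map_comp; apply: map_id_in => -[[p w] q] _ /=; rewrite revK. Qed.

Lemma rev_neq0 (s : seq S) : (rev s != [::]) = (s != [::]).
Proof. by rewrite -!size_eq0 size_rev. Qed.

Lemma L2R R c1 c2 : L_step R c1 c2 -> R_step (mirR R) (mc c1) (mc c2).
Proof.
case=> [t u v x p q hr ha hn|x y p hx hy] /=.
  rewrite /mc /= !rev_cat -catA; apply: R_step_del.
  - by rewrite mem_mirR revK.
  - by move=> w q'; rewrite mem_mirR => /ha; rewrite -infix_rev revK.
  move=> [u2 [x1 [h1 h2 hs hp he]]]; apply: hn; exists (rev u2), (rev x1); split.
  - by rewrite rev_neq0.
  - by rewrite rev_neq0.
  - by rewrite prefix_revLR.
  - by rewrite suffix_revLR.
  by rewrite -rev_cat he revK.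
rewrite /mc /= rev_cat; apply: R_step_jump; first by rewrite rev_neq0.
by move=> w q'; rewrite mem_mirR => /hy; rewrite -infix_rev revK.
Qed.

Lemma R2L R c1 c2 : R_step (mirR R) c1 c2 -> L_step R (mc c1) (mc c2).
Proof.
case=> [t u v x p q hr ha hn|x y p hx hy] /=.
  rewrite /mc /= !rev_cat -catA; apply: L_step_del.
  - by move: hr; rewrite mem_mirR.
  - by move=> w q' h; rewrite -infix_rev revK; apply: (ha _ q'); rewrite mem_mirR revK.
  move=> [u1 [x2 [h1 h2 hs hp he]]]; apply: hn; exists (rev u1), (rev x2); split.
  - by rewrite rev_neq0.
  - by rewrite rev_neq0.
  - by rewrite suffix_revLR.
  - by rewrite prefix_revLR.
  by rewrite -rev_cat he revK.
rewrite /mc /= rev_cat; apply: L_step_jump; first by rewrite rev_neq0.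
by move=> w q' h; rewrite -infix_rev revK; apply: (hy _ q'); rewrite mem_mirR revK.
Qed.

Lemma L_acc_mir R q0 F w : L_accepts R q0 F w <-> R_accepts (mirR R) q0 F (rev w).
Proof.
split => [[qf hq hst]|[qf hq hst]]; exists qf => //.
  exact: (star_map (@L2R R) hst).
by have := star_map (@R2L R) hst; rewrite /mc /= revK.
Qed.

Lemma mirR_ne R : rules_nonempty R -> rules_nonempty (mirR R).
Proof. by move=> h p w q; rewrite mem_mirR => /h; rewrite rev_neq0. Qed.

Lemma mirR_Rdet R : L_det R -> R_det (mirR R).
Proof. by move=> h p w q1 q2; rewrite !mem_mirR; apply: h. Qed.

Lemma mirR_Ldet R : R_det R -> L_det (mirR R).
Proof. by move=> h p w q1 q2; rewrite !mem_mirR; apply: h. Qed.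

End Mirror.

Lemma Ec_cE w : Ec w <-> cE (rev w).
Proof.
split => [[g [-> hg hab]]|[g [E hg hab]]].
  by exists (rev g); rewrite rev_rcons mem_rev !count_rev.
exists (rev g); split; last by rewrite !count_rev.
  by rewrite -[w]revK E rev_cons.
by rewrite mem_rev.
Qed.

Lemma cE_notL : ~ GLLOWJ cE.
Proof.
case=> Q [q0 [F [R [Rne Rd HL]]]]; apply: Ec_notR.
exists Q, q0, F, (mirR R); split; [exact: mirR_ne | exact: mirR_Rdet |].
by move=> w; rewrite Ec_cE HL L_acc_mir revK.
Qed.

Lemma Ec_L : GLLOWJ Ec.
Proof.
exists QA, sS, FA, (mirR RA); split; [exact: mirR_ne RA_ne | exact: mirR_Ldet RA_det |].
move=> w; rewrite L_acc_mir mirRK Ec_cE; split; [exact: RA_complete | exact: RA_sound].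
Qed.

Theorem proposition2 :
  (exists (S : finType) (L : language S), GRLOWJ L /\ ~ GLLOWJ L) /\
  (exists (S : finType) (L : language S), GLLOWJ L /\ ~ GRLOWJ L).
Proof.
split.
  by exists _, cE; split; [exact: cE_R | exact: cE_notL].
by exists _, Ec; split; [exact: Ec_L | exact: Ec_notR].
Qed.
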